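(* Consider a deterministic sequential oligopoly $\boldsymbol{n}=(n_1,\dots,n_T)$ in which firm $i$ has payoff $x_i\,a_i(\overline{X}_c^i-X)$ with $a_i>0$ and commonly known parameters $\overline{X}_c^i$, and all equilibria considered are interior. Suppose the equilibrium quantities are $(x_1^*,\dots,x_n^* )$ and that these quantities remain the same when one additional firm, with payoff $x_{n+1}a_{n+1}(\overline{X}_c-X)$, is added alone in a new final period $T+1$. Then $\overline{X}_c^i=\overline{X}_c$ for all firms $i=1,\dots,n$.
   Context: $X=\sum_i x_i$ is total quantity. Interpretation: $\overline{X}_c^i=\overline{X}^i-c_i/a_i$ where firm $i$ has constant marginal cost $c_i$ and inverse demand $a_i(\overline{X}^i-X)$. Firms are partitioned into periods $\mathcal{I}_1,\dots,\mathcal{I}_T$; a firm in period $t$ observes the cumulative quantity of all firms in earlier periods and chooses simultaneously with the other firms of period $t$; equilibrium is subgame perfect. *)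

(* Defs.v *)
(* Sequential oligopoly with linear demand, payoffs
   x_i * a_i * (Xc_i - X), firms indexed by a finite type I,
   period of firm i given by p i : nat (periods played in increasing order). *)
From HB Require Import structures.
From mathcomp Require Import all_boot all_order all_algebra.
Set Implicit Arguments. Unset Strict Implicit. Unset Printing Implicit Defensive.
Import Order.TTheory GRing.Theory Num.Theory.
Local Open Scope ring_scope.

Section Oligopoly.
Variables (R : realFieldType) (I : finType).

Definition horizon (p : I -> nat) : nat := (\max_(j : I) p j).+1.

(* A strategy of firm i : a map from the cumulative quantity of all firms
   in earlier periods (what firm i observes) to its own quantity.
   [cum p s t q k] = cumulative quantity just before period t+k, when the
   play starts at (the beginning of) period t with cumulative quantity q
   and all firms follow s. *)
Fixpoint cum (p : I -> nat) (s : I -> R -> R) (t : nat) (q : R) (k : nat) : R :=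
  match k with
  | 0 => q
  | k'.+1 => let c := cum p s t q k' in
             c + \sum_(j : I | p j == (t + k')%N) s j c
  end.

Definition total (p : I -> nat) (s : I -> R -> R) (t : nat) (q : R) : R :=
  cum p s t q (horizon p - t).

Definition payoff (p : I -> nat) (a Xc : I -> R) (s : I -> R -> R)
    (i : I) (q : R) : R :=
  s i q * (a i * (Xc i - total p s (p i) q)).

Definition deviate (s : I -> R -> R) (i : I) (y : R) : I -> R -> R :=
  fun j => if j == i then (fun _ => y) else s j.

(* subgame perfect equilibrium: at every information set (period of i,
   observed cumulative quantity q), firm i's choice is a best response to
   the simultaneous choices of its period-mates and the strategies of
   later firms.  Quantities range over all of R (interior equilibria). *)
Definition is_SPE (p : I -> nat) (a Xc : I -> R) (s : I -> R -> R) : Prop :=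
  forall (i : I) (q y : R), payoff p a Xc (deviate s i y) i q <= payoff p a Xc s i q.

Definition outcome (p : I -> nat) (s : I -> R -> R) (i : I) : R :=
  s i (cum p s 0 0 (p i)).

Definition ext_period (p : I -> nat) : option I -> nat :=
  fun o => match o with Some i => p i | None => horizon p end.

Definition ext_param (f : I -> R) (fnew : R) : option I -> R :=
  fun o => match o with Some i => f i | None => fnew end.

End Oligopoly.

(* Main.v *)
Require Import Defs.
From HB Require Import structures.
From mathcomp Require Import all_boot all_order all_algebra.
From mathcomp Require Import ring lra.
Set Implicit Arguments. Unset Strict Implicit. Unset Printing Implicit Defensive.
Import Order.TTheory GRing.Theory Num.Theory.
Local Open Scope ring_scope.

Lemma big_opt (T : Type) (idx : T) (op : Monoid.com_law idx) (I : finType)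
  (P : pred (option I)) (F : option I -> T) :
  \big[op/idx]_(o | P o) F o =
  op (if P None then F None else idx) (\big[op/idx]_(j | P (Some j)) F (Some j)).
Proof.
rewrite big_mkcond (bigD1 None) //=; congr (op _ _).
rewrite (reindex_omap Some id) //=; last by case.
by rewrite [RHS]big_mkcond; apply: eq_bigl => j; rewrite eqxx.
Qed.

Section Gen.
Variables (R : realFieldType) (I : finType).
Implicit Types (p : I -> nat) (s : I -> R -> R).

Lemma cum_add p s t q m k :
  cum p s t q (m + k) = cum p s (t + m) (cum p s t q m) k.
Proof.
elim: k => [|k IH]; first by rewrite addn0.
by rewrite addnS /= IH addnA.
Qed.

Lemma cum_ext p s s2 t q k :
  (forall j, (t <= p j)%N -> s j = s2 j) -> cum p s t q k = cum p s2 t q k.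
Proof.
move=> h; elim: k => [|k IH] //=; rewrite IH; congr (_ + _).
by apply: eq_bigr => j /eqP pj; rewrite h // pj leq_addr.
Qed.

Lemma cum_S p s t q k :
  cum p s t q k.+1 = cum p s t.+1 (q + \sum_(j | p j == t) s j q) k.
Proof.
by rewrite -add1n cum_add addn1 /= addn0.
Qed.

Lemma quad (a c X al B x : R) : 0 < a -> 0 < c ->
  (forall y, y * (a * (X - (al + c * (B + y)))) <= x * (a * (X - (al + c * (B + x))))) ->
  X - (al + c * (B + x)) = c * x.
Proof.
move=> ha hc h.
set w := (X - al - c * B) / (c * 2).
have hX : X = c * 2 * w + al + c * B.
  have hc2 : c * 2 != 0 by rewrite mulf_neq0 // ?gt_eqF // (_ : 2 = 1 + 1) // ltr_pwDl.
  rewrite /w [c * 2 * _]mulrC divfK //; ring.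
have h1 := h w; rewrite hX in h1 *.
have e : a * c * (w - x) ^+ 2 =
  w * (a * (c * 2 * w + al + c * B - (al + c * (B + w)))) -
  x * (a * (c * 2 * w + al + c * B - (al + c * (B + x)))) by ring.
have hac : 0 < a * c by rewrite mulr_gt0.
have h2 : (w - x) ^+ 2 <= 0.
  by rewrite -(pmulr_rle0 _ hac) e subr_le0.
have : (w - x) ^+ 2 = 0 by apply/le_anti; rewrite h2 sqr_ge0.
move/eqP; rewrite sqrf_eq0 subr_eq0 => /eqP ->; ring.
Qed.
End Gen.

Definition nR (R : realFieldType) (I : finType) (p : I -> nat) (t : nat) : R :=
  \sum_(j | p j == t) 1.

Fixpoint sl (R : realFieldType) (I : finType) (p : I -> nat) (t k : nat) : R :=
  match k with
  | 0 => 1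
  | k'.+1 => sl R p t.+1 k' / (nR R p t + 1)
  end.

Lemma nR_ge0 (R : realFieldType) (I : finType) (p : I -> nat) t : 0 <= nR R p t.
Proof. by apply: sumr_ge0 => j _; rewrite ler01. Qed.

Lemma nR1_neq0 (R : realFieldType) (I : finType) (p : I -> nat) t : nR R p t + 1 != 0.
Proof. by rewrite gt_eqF // ltr_wpDl ?nR_ge0 ?ltr01. Qed.

Lemma sl_gt0 (R : realFieldType) (I : finType) (p : I -> nat) k t : 0 < sl R p t k.
Proof.
elim: k t => [|k IH] t /=; first exact: ltr01.
by rewrite divr_gt0 // ltr_wpDl ?nR_ge0 ?ltr01.
Qed.

Section Game.
Variables (R : realFieldType) (I : finType) (p : I -> nat) (a Xc : I -> R)
  (s : I -> R -> R).
Hypothesis ha : forall i, 0 < a i.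
Hypothesis hS : is_SPE p a Xc s.
Local Notation H := (horizon p).

Lemma foc_step t k : (t + k.+1 = H)%N ->
  forall al, (forall q, cum p s t.+1 q k = al + sl R p t.+1 k * q) ->
  forall i, p i = t -> forall q, Xc i - cum p s t q k.+1 = sl R p t.+1 k * s i q.
Proof.
move=> hk al hal i pi q.
set c := sl R p t.+1 k.
set B := q + \sum_(j | (p j == t) && (j != i)) s j q.
have gen : forall s2 : I -> R -> R, (forall j, j != i -> s2 j = s j) ->
    cum p s2 t q k.+1 = al + c * (B + s2 i q).
  move=> s2 h2; rewrite cum_S -(cum_ext _ _ (s := s)); last first.
    move=> j hj; rewrite h2 //; apply/eqP => ji; move: hj; rewrite ji pi ltnn //.
  rewrite hal (bigD1 i) /=; last by rewrite pi.
  rewrite /B; congr (_ + _ * _).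
  rewrite (eq_bigr (fun j => s j q)); first by ring.
  by move=> j /andP [_ ji]; rewrite h2.
have tot : (H - p i)%N = k.+1 by rewrite -hk pi addKn.
have := quad (X := Xc i) (al := al) (B := B) (x := s i q) (ha i) (sl_gt0 R p k t.+1).
rewrite -/c -(gen s) // => -> // y.
have := hS i q y; rewrite /payoff /Defs.total tot pi gen; last first.
  by move=> j ji; rewrite /deviate (negbTE ji).
by rewrite gen // /deviate eqxx.
Qed.

Lemma aff k : forall t, (t + k = H)%N ->
  exists al, forall q, cum p s t q k = al + sl R p t k * q.
Proof.
elim: k => [|k IH] t hk.
  by exists 0 => q; rewrite /= add0r mul1r.
have [|al hal] := IH t.+1; first by rewrite addSnnS.
have foc := foc_step hk hal.
set c := sl R p t.+1 k.
set n := nR R p t.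
set X := \sum_(j | p j == t) Xc j.
exists (al + (X - n * al) / (n + 1)) => q.
set S := \sum_(j | p j == t) s j q.
have e1 : cum p s t q k.+1 = al + c * (q + S) by rewrite cum_S hal.
have e2 : X - n * (al + c * (q + S)) = c * S.
  have : \sum_(j | p j == t) (Xc j - cum p s t q k.+1) = \sum_(j | p j == t) c * s j q.
    by apply: eq_bigr => j /eqP pj; rewrite foc.
  rewrite sumrB -mulr_sumr -/S -/X e1 => <-; congr (_ - _).
  by rewrite /n /nR mulr_suml; apply: eq_bigr => j _; rewrite mul1r.
have hX : X = n * (al + c * (q + S)) + c * S by rewrite -e2; ring.
have hn := nR1_neq0 R p t.
rewrite e1 /= -/n -/c hX; field.
by rewrite -/n in hn.
Qed.

Lemma foc i q : (p i < H)%N ->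
  Xc i - Defs.total p s (p i) q = sl R p (p i).+1 (H - (p i).+1) * s i q.
Proof.
move=> lt.
have hk : ((p i).+1 + (H - (p i).+1) = H)%N by rewrite subnKC.
have [al hal] := aff hk.
have hk' : (p i + (H - (p i).+1).+1 = H)%N by rewrite addnS -addSn.
rewrite /Defs.total -(foc_step hk' hal) //; congr (_ - cum _ _ _ _ _).
by rewrite subnS prednK // subn_gt0.
Qed.
End Game.

Lemma lt_hor (I : finType) (p : I -> nat) i : (p i < horizon p)%N.
Proof. by rewrite ltnS leq_bigmax. Qed.

Lemma hor_ext (I : finType) (p : I -> nat) :
  horizon (ext_period p) = (horizon p).+1.
Proof.
rewrite {1}/horizon big_opt /=; congr _.+1; apply/maxn_idPl.
by apply/bigmax_leqP => j _; rewrite ltnW // lt_hor.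
Qed.

Lemma nR_ext_lt (R : realFieldType) (I : finType) (p : I -> nat) t :
  (t < horizon p)%N -> nR R (ext_period p) t = nR R p t.
Proof.
move=> lt; rewrite /nR big_opt /=.
by rewrite (_ : (horizon p == t) = false) ?add0r //; apply/negbTE; rewrite gtn_eqF.
Qed.

Lemma nR_ext_H (R : realFieldType) (I : finType) (p : I -> nat) :
  nR R (ext_period p) (horizon p) = 1.
Proof.
rewrite /nR big_opt /= eqxx big_pred0 ?addr0 // => j.
by rewrite ltn_eqF // lt_hor.
Qed.

Lemma sl_ext (R : realFieldType) (I : finType) (p : I -> nat) k : forall t,
  (t + k = horizon p)%N -> sl R (ext_period p) t k.+1 = sl R p t k / 2.
Proof.
elim: k => [|k IH] t hk.
  rewrite addn0 in hk; rewrite /= hk nR_ext_H div1r; congr _^-1; lra.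
change (sl R (ext_period p) t.+1 k.+1 / (nR R (ext_period p) t + 1) = sl R p t k.+1 / 2).
rewrite IH; last by rewrite addSnnS.
rewrite nR_ext_lt; last by rewrite -hk -addSnnS leq_addr.
change (sl R p t.+1 k / 2 / (nR R p t + 1) = sl R p t.+1 k / (nR R p t + 1) / 2).
by rewrite -!mulrA [2^-1 * _]mulrC.
Qed.

Theorem proposition4 (R : realFieldType) (I : finType) (p : I -> nat)
    (a Xc : I -> R) (anew Xcnew : R)
    (s : I -> R -> R) (s' : option I -> R -> R) :
  (forall i, 0 < a i) -> 0 < anew ->
  is_SPE p a Xc s ->
  is_SPE (ext_period p) (ext_param a anew) (ext_param Xc Xcnew) s' ->
  (forall i, outcome (ext_period p) s' (Some i) = outcome p s i) ->
  forall i, Xc i = Xcnew.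
Proof.
move=> ha hanew hS hS' hout i.
have ha' : forall o, 0 < ext_param a anew o by case.
have path : forall k, (k <= (horizon p))%N -> cum (ext_period p) s' 0 0 k = cum p s 0 0 k.
  elim=> [|k IH] hk; first by [].
  rewrite [LHS]/= [RHS]/= IH; last exact: ltnW.
  congr (_ + _).
  rewrite big_opt /= add0n (_ : (horizon p == k) = false) ?add0r; last first.
    by apply/negbTE; rewrite gtn_eqF.
  apply: eq_bigr => j /eqP pj.
  have := hout j; rewrite /outcome /= pj IH; last exact: ltnW.
  by move=> ->.
have stepH : forall q, cum (ext_period p) s' (horizon p) q 1 = q + s' None q.
  move=> q; rewrite /= addn0 big_opt /= eqxx big_pred0 ?addr0 // => j.
  by rewrite ltn_eqF // lt_hor.
have focN : forall q, Xcnew - q - s' None q = s' None q.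
  move=> q.
  have hlt : (ext_period p None < horizon (ext_period p))%N by rewrite hor_ext /= ltnSn.
  have := foc ha' hS' (i:=None) q hlt.
  rewrite hor_ext /= subnn /= mul1r /Defs.total hor_ext subSn // subnn stepH.
  by rewrite opprD addrA.
set t := p i.
set X := cum p s 0 0 (horizon p).
have lt : (t < (horizon p))%N by exact: lt_hor.
have e1 := foc ha hS (i:=i) (cum p s 0 0 t) lt.
have e2 := foc ha' hS' (i:=Some i) (cum p s 0 0 t).
have lt' : (ext_period p (Some i) < horizon (ext_period p))%N.
  by rewrite hor_ext ltnS /=; exact: ltnW.
specialize (e2 lt').
have tot1 : Defs.total p s t (cum p s 0 0 t) = X.
  by rewrite /Defs.total -{1}(add0n t) -cum_add (subnKC (ltnW lt)).
have tot2 : Defs.total (ext_period p) s' t (cum p s 0 0 t) = X + s' None X.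
  rewrite /Defs.total hor_ext -(path t (ltnW lt)) -{1}(add0n t) -cum_add (subnKC (leqW (ltnW lt))).
  by rewrite -addn1 cum_add add0n path // stepH.
have hx : s' (Some i) (cum p s 0 0 t) = s i (cum p s 0 0 t).
  by have := hout i; rewrite /outcome /= -(path t (ltnW lt)).
have hsl : sl R (ext_period p) t.+1 ((horizon p).+1 - t.+1) = sl R p t.+1 ((horizon p) - t.+1) / 2.
  rewrite subSS -sl_ext; last by rewrite subnKC.
  by rewrite subnS prednK // subn_gt0.
rewrite /= tot2 hx hor_ext in e2; change (p i) with t in e2; rewrite hsl in e2; rewrite tot1 in e1.
have := focN X.
move: e1 e2; set c := sl R p t.+1 ((horizon p) - t.+1); set x := s i _; set z := s' None X.
move=> e1 e2 e3.
have : Xc i - (X + z) = (Xc i - X) / 2 by rewrite e2 e1; ring.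
lra.
Qed.
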